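(* For every integer $n\ge1$ and every $u\in V$, the normalizing factor satisfies $Z_u<\dfrac{1}{\ln(n+1)}$.
   Context: For an integer $n\ge1$, the $n$-octahedral graph $G'_n=(V,E')$ is the undirected graph with vertex set $V=\{u\in\mathbb{Z}^3:|u_1|+|u_2|+|u_3|=n\}$ and edge set $E'=\{\{v,w\}\subset V: v\neq w,\ |v_i-w_i|\le 1 \text{ for all } i=1,2,3\}$. For $u,v\in V$, $d_{uv}$ denotes the shortest-path (number of edges) distance between $u$ and $v$ in $G'_n$. For $u\in V$, $Z_u=\left(\sum_{w\in V\setminus\{u\}} d_{uw}^{-2}\right)^{-1}$. *)

(* Defs.v *)
From Stdlib Require Import Reals ZArith List Lia ClassicalEpsilon.
Import ListNotations.
Open Scope R_scope.

Definition pt := (Z * Z * Z)%type.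
Definition c1 (v : pt) : Z := fst (fst v).
Definition c2 (v : pt) : Z := snd (fst v).
Definition c3 (v : pt) : Z := snd v.

Definition inV (n : nat) (v : pt) : Prop :=
  (Z.abs (c1 v) + Z.abs (c2 v) + Z.abs (c3 v) = Z.of_nat n)%Z.

Definition zrange (n : nat) : list Z :=
  map (fun k => (Z.of_nat k - Z.of_nat n)%Z) (seq 0 (2 * n + 1)).
Definition Vlist (n : nat) : list pt :=
  filter (fun v => Z.eqb (Z.abs (c1 v) + Z.abs (c2 v) + Z.abs (c3 v)) (Z.of_nat n))
    (list_prod (list_prod (zrange n) (zrange n)) (zrange n)).

Definition edge (n : nat) (v w : pt) : Prop :=
  inV n v /\ inV n w /\ v <> w /\
  (Z.abs (c1 v - c1 w) <= 1)%Z /\ (Z.abs (c2 v - c2 w) <= 1)%Z /\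
  (Z.abs (c3 v - c3 w) <= 1)%Z.

Inductive walk (n : nat) : nat -> pt -> pt -> Prop :=
| walk0 : forall v, walk n 0 v v
| walkS : forall k u v w, edge n u v -> walk n k v w -> walk n (S k) u w.

Definition is_dist (n : nat) (u w : pt) (k : nat) : Prop :=
  walk n k u w /\ forall j, (j < k)%nat -> ~ walk n j u w.

(* d_{uw}: the shortest-path distance (G'_n is connected, so it exists) *)
Definition dist (n : nat) (u w : pt) : nat :=
  epsilon (inhabits 0%nat) (is_dist n u w).

Definition pt_eqb (v w : pt) : bool :=
  (Z.eqb (c1 v) (c1 w) && Z.eqb (c2 v) (c2 w) && Z.eqb (c3 v) (c3 w))%bool.

Definition Zu (n : nat) (u : pt) : R :=
  / fold_right Rplus 0
      (map (fun w => / (INR (dist n u w)) ^ 2)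
         (filter (fun w => negb (pt_eqb w u)) (Vlist n))).

(* Main.v *)
From Stdlib Require Import Reals ZArith List Lia Lra Permutation Classical_Prop ClassicalEpsilon.
Require Import Defs.
Open Scope R_scope.

Fixpoint T (a : nat) : R :=
  match a with
  | O => 0
  | S k => T k + INR (S a) / (INR a) ^ 2
  end.

Lemma ln_le_sub1 y : 0 < y -> ln y <= y - 1.
Proof. intros Hy. pose proof (exp_ineq1_le (ln y)). rewrite exp_ln in H; lra. Qed.

Lemma T_bound a : (1 <= a)%nat -> ln (3 * INR a + 1) < T a.
Proof.
  induction a as [|a IH]; intros Ha; [lia|].
  destruct (Nat.eq_dec a 0) as [->|Hne].
  - simpl. replace (3 * 1 + 1) with 4 by lra.
    assert (He : 2 < exp 1) by (pose proof (exp_ineq1 1); lra).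
    assert (4 < exp 2).
    { replace 2 with (1+1) by lra. rewrite exp_plus. nra. }
    assert (ln 4 < 2).
    { rewrite <- (ln_exp 2). apply ln_increasing; lra. }
    lra.
  - assert (IH' := IH ltac:(lia)).
    change (T (S a)) with (T a + INR (S (S a)) / (INR (S a)) ^ 2).
    rewrite !S_INR.
    assert (Hapos : 1 <= INR a) by (apply (le_INR 1); lia).
    set (x := INR a) in *.
    assert (Hsplit : 3 * (x+1) + 1 = (3*x+1) * ((3*(x+1)+1)/(3*x+1))) by (field; lra).
    rewrite Hsplit, ln_mult.
    2: lra.
    2: apply Rdiv_lt_0_compat; lra.
    pose proof (ln_le_sub1 ((3*(x+1)+1)/(3*x+1)) ltac:(apply Rdiv_lt_0_compat; lra)).
    assert ((3*(x+1)+1)/(3*x+1) - 1 <= (x+1+1)/(x+1)^2).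
    { apply Rle_trans with (3/(3*x+1)).
      - right. field. lra.
      - apply Rmult_le_reg_r with ((3*x+1)*(x+1)^2). nra.
        field_simplify; try lra. }
    lra.
Qed.

Lemma walk_snoc n k u v w : walk n k u v -> edge n v w -> walk n (S k) u w.
Proof.
  induction 1; intros He.
  - apply walkS with w; [exact He| constructor].
  - apply walkS with v; auto.
Qed.

Lemma exists_dist n u w k : walk n k u w -> exists m, Defs.is_dist n u w m.
Proof.
  induction k as [k IH] using lt_wf_ind; intros Hw.
  destruct (classic (exists j, (j < k)%nat /\ walk n j u w)) as [[j [Hj Hw']]|Hno].
  - exact (IH j Hj Hw').
  - exists k; split; auto. intros j Hj Hw'. apply Hno; eauto.
Qed.

Lemma dist_bounds n u w k : walk n k u w -> u <> w ->
  (1 <= Defs.dist n u w <= k)%nat.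
Proof.
  intros Hw Hne.
  assert (Hd : Defs.is_dist n u w (Defs.dist n u w)).
  { unfold Defs.dist. apply epsilon_spec. exact (exists_dist n u w k Hw). }
  destruct Hd as [Hd1 Hd2]. split.
  - destruct (Defs.dist n u w) eqn:E; [|lia].
    inversion Hd1; subst. congruence.
  - destruct (le_lt_dec (Defs.dist n u w) k) as [|Hlt]; auto.
    exfalso. exact (Hd2 k Hlt Hw).
Qed.

Definition sg (z : Z) : Z := if (z <? 0)%Z then (-1)%Z else 1%Z.

Definition W (u : pt) (i j : nat) : pt :=
  ((c1 u - sg (c1 u) * Z.of_nat i, c2 u + sg (c2 u) * Z.of_nat j)%Z,
    (c3 u + sg (c3 u) * (Z.of_nat i - Z.of_nat j))%Z).

Ltac sgcases :=
  unfold sg; repeat match goal with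
  | |- context [(?z <? 0)%Z] => destruct (Z.ltb_spec z 0)
  end.

Lemma W_inV n u i j : inV n u -> (j <= i)%nat -> (Z.of_nat i <= Z.abs (c1 u))%Z ->
  inV n (W u i j).
Proof.
  destruct u as [[x y] z]. unfold inV, W, c1, c2, c3; cbn [fst snd]. intros H1 H2 H3.
  sgcases; lia.
Qed.

Lemma W_edge n u i j j' : inV n u -> (j <= i)%nat -> (Z.of_nat (S i) <= Z.abs (c1 u))%Z ->
  (j <= j' <= S j)%nat -> (j' <= S i)%nat -> edge n (W u i j) (W u (S i) j').
Proof.
  intros HV H1 H2 H3 H4. split; [|split;[|split]].
  - apply W_inV; auto; lia.
  - apply W_inV; auto; lia.
  - destruct u as [[x y] z]. unfold W, c1, c2, c3; cbn [fst snd]. intros E.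
    injection E. sgcases; lia.
  - destruct u as [[x y] z]. unfold W, c1, c2, c3; cbn [fst snd].
    sgcases; repeat split; lia.
Qed.

Lemma W_0 u : W u 0 0 = u.
Proof. destruct u as [[x y] z]. unfold W, c1, c2, c3; cbn [fst snd]. f_equal; [f_equal|]; lia. Qed.

Lemma W_walk n u : inV n u -> forall i j, (j <= i)%nat -> (Z.of_nat i <= Z.abs (c1 u))%Z ->
  walk n i u (W u i j).
Proof.
  intros HV i. induction i as [|i IH]; intros j Hj Hi.
  - replace j with 0%nat by lia. rewrite W_0. constructor.
  - destruct (Nat.eq_dec j (S i)) as [->|Hne].
    + apply walk_snoc with (W u i i). apply IH; lia. apply W_edge; auto; lia.
    + apply walk_snoc with (W u i j). apply IH; lia. apply W_edge; auto; lia.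
Qed.

Lemma W_inj u i j i' j' : W u i j = W u i' j' -> i = i' /\ j = j'.
Proof.
  destruct u as [[x y] z]. unfold W, c1, c2, c3; cbn [fst snd]. intros E. injection E.
  sgcases; lia.
Qed.

Lemma W_neq u i j : (1 <= i)%nat -> W u i j <> u.
Proof.
  intros Hi E. rewrite <- (W_0 u) in E at 2. apply W_inj in E. lia.
Qed.

Definition sumR (l : list R) : R := fold_right Rplus 0 l.

Lemma sumR_app l1 l2 : sumR (l1 ++ l2) = sumR l1 + sumR l2.
Proof. induction l1; simpl; [lra|]. unfold sumR in *; simpl; rewrite IHl1; lra. Qed.

Lemma sumR_perm l1 l2 : Permutation l1 l2 -> sumR l1 = sumR l2.
Proof. induction 1; unfold sumR in *; simpl; lra. Qed.

Lemma sumR_filter {A} (f : A -> R) (p : A -> bool) l :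
  sumR (map f l) = sumR (map f (filter p l)) + sumR (map f (filter (fun x => negb (p x)) l)).
Proof.
  induction l as [|a l IH]; simpl; [unfold sumR; simpl; lra|].
  destruct (p a); simpl; unfold sumR in *; simpl; rewrite IH; lra.
Qed.

Lemma sumR_nonneg (l : list R) : (forall x, In x l -> 0 <= x) -> 0 <= sumR l.
Proof.
  induction l; simpl; intros H; unfold sumR in *; simpl; [lra|].
  pose proof (H a (or_introl eq_refl)). pose proof (IHl (fun x Hx => H x (or_intror Hx))). lra.
Qed.

Lemma pt_dec (x y : pt) : {x = y} + {x <> y}.
Proof. repeat decide equality. Qed.

Lemma sub_sum (g : pt -> R) l m : NoDup l -> NoDup m -> incl m l ->
  (forall x, In x l -> 0 <= g x) -> sumR (map g m) <= sumR (map g l).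
Proof.
  intros Hl Hm Hinc Hg.
  set (p := fun x => if in_dec pt_dec x m then true else false).
  rewrite (sumR_filter g p l).
  assert (Hp : Permutation (filter p l) m).
  { apply NoDup_Permutation; [apply NoDup_filter; auto | auto |].
    intros x. rewrite filter_In. unfold p. destruct (in_dec pt_dec x m); split; intuition; discriminate. }
  rewrite (sumR_perm _ _ (Permutation_map g Hp)).
  assert (0 <= sumR (map g (filter (fun x => negb (p x)) l))).
  { apply sumR_nonneg. intros y Hy. apply in_map_iff in Hy. destruct Hy as [x [<- Hx]].
    apply filter_In in Hx. apply Hg; tauto. }
  lra.
Qed.

Lemma NoDup_flat_map_key {A B} (F : A -> list B) l :
  NoDup l -> (forall x, In x l -> NoDup (F x)) ->
  (forall x y z, In x l -> In y l -> In z (F x) -> In z (F y) -> x = y) ->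
  NoDup (flat_map F l).
Proof.
  induction l as [|a l IH]; intros Hl HF Hk; simpl; [constructor|].
  inversion Hl; subst. apply NoDup_app.
  - apply HF; simpl; auto.
  - apply IH; auto. intros; apply HF; simpl; auto. intros; eapply Hk; simpl; eauto.
  - intros z Hz Hz'. apply in_flat_map in Hz'. destruct Hz' as [y [Hy Hzy]].
    assert (a = y) by (eapply Hk; simpl; eauto). subst. contradiction.
Qed.

Lemma NoDup_prod {A B} (l : list A) (l' : list B) : NoDup l -> NoDup l' -> NoDup (list_prod l l').
Proof.
  intros. rewrite list_prod_as_flat_map. apply NoDup_flat_map_key; auto.
  - intros x _. apply FinFun.Injective_map_NoDup; auto. intros a b E; injection E; auto.
  - intros x y z _ _ Hx Hy. apply in_map_iff in Hx, Hy.
    destruct Hx as [b [<- _]]. destruct Hy as [b' [E _]]. injection E; auto.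
Qed.

Lemma zrange_NoDup n : NoDup (zrange n).
Proof.
  unfold zrange. apply FinFun.Injective_map_NoDup_in; [|apply seq_NoDup].
  intros x y _ _ E. lia.
Qed.

Lemma zrange_In n z : (- Z.of_nat n <= z <= Z.of_nat n)%Z -> In z (zrange n).
Proof.
  intros H. unfold zrange. apply in_map_iff. exists (Z.to_nat (z + Z.of_nat n)).
  split; [lia|]. apply in_seq. lia.
Qed.

Lemma Vlist_NoDup n : NoDup (Vlist n).
Proof. unfold Vlist. apply NoDup_filter. repeat apply NoDup_prod; apply zrange_NoDup. Qed.

Lemma Vlist_In n v : inV n v -> In v (Vlist n).
Proof.
  destruct v as [[x y] z]. unfold inV, Vlist, c1, c2, c3; cbn [fst snd]. intros H.
  apply filter_In. split.
  - apply in_prod; [apply in_prod|]; apply zrange_In; lia.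
  - cbn [fst snd]. apply Z.eqb_eq. lia.
Qed.

Lemma pt_eqb_false v w : v <> w -> pt_eqb v w = false.
Proof.
  destruct v as [[x y] z], w as [[x' y'] z']. unfold pt_eqb, c1, c2, c3; cbn [fst snd].
  intros H. destruct (Z.eqb_spec x x'), (Z.eqb_spec y y'), (Z.eqb_spec z z'); simpl; auto.
  subst. congruence.
Qed.

Lemma sumR_const_le {A} (f : A -> R) c l : (forall x, In x l -> c <= f x) ->
  INR (length l) * c <= sumR (map f l).
Proof.
  induction l as [|a l IH]; intros H; unfold sumR in *; cbn [map fold_right length]; [simpl; lra|].
  rewrite S_INR. pose proof (H a (or_introl eq_refl)).
  pose proof (IH (fun x Hx => H x (or_intror Hx))). lra.
Qed.

Lemma sumR_le {A} (f f' : A -> R) l : (forall x, In x l -> f x <= f' x) ->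
  sumR (map f l) <= sumR (map f' l).
Proof.
  induction l as [|a l IH]; intros H; simpl; unfold sumR in *; simpl; [lra|].
  pose proof (H a (or_introl eq_refl)).
  pose proof (IH (fun x Hx => H x (or_intror Hx))). lra.
Qed.

Lemma sumR_flat_map {A B} (f : B -> R) (F : A -> list B) l :
  sumR (map f (flat_map F l)) = sumR (map (fun x => sumR (map f (F x))) l).
Proof.
  induction l as [|a l IH]; simpl; [reflexivity|].
  rewrite map_app, sumR_app, IH. reflexivity.
Qed.

Lemma walk_map n (s : pt -> pt) (Hs : forall v w, edge n v w -> edge n (s v) (s w)) k u w :
  walk n k u w -> walk n k (s u) (s w).
Proof. induction 1; [constructor| econstructor; eauto]. Qed.

Lemma sumR_T a : sumR (map (fun i => INR (S i) / INR i ^ 2) (seq 1 a)) = T a.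
Proof.
  induction a as [|a IH]; [reflexivity|].
  rewrite seq_S, map_app, sumR_app, IH. simpl (1 + a)%nat.
  unfold sumR; simpl. lra.
Qed.

Lemma ginv_nonneg (d : nat) : 0 <= / INR d ^ 2.
Proof.
  destruct (Req_dec (INR d ^ 2) 0) as [E|E].
  - rewrite E, Rinv_0. lra.
  - apply Rlt_le, Rinv_0_lt_compat. pose proof (pow2_ge_0 (INR d)). lra.
Qed.

Lemma family (n : nat) (s : pt -> pt) (u : pt) :
  (forall v, s (s v) = v) -> (forall v, inV n v -> inV n (s v)) ->
  (forall v w, edge n v w -> edge n (s v) (s w)) ->
  inV n u ->
  T (Z.to_nat (Z.abs (c1 (s u)))) <=
  fold_right Rplus 0
      (map (fun w => / (INR (Defs.dist n u w)) ^ 2)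
         (filter (fun w => negb (pt_eqb w u)) (Vlist n))).
Proof.
  intros Hinv HsV HsE HV.
  set (u' := s u). set (a := Z.to_nat (Z.abs (c1 u'))).
  set (g := fun w => / (INR (Defs.dist n u w)) ^ 2).
  set (F := fun i => map (fun j => s (W u' i j)) (seq 0 (S i))).
  set (m := flat_map F (seq 1 a)).
  assert (HV' : inV n u') by (apply HsV; auto).
  assert (Hsu : s u' = u) by apply Hinv.
  assert (Hinj : forall i j i' j', s (W u' i j) = s (W u' i' j') -> i = i' /\ j = j').
  { intros i j i' j' E. apply (f_equal s) in E. rewrite !Hinv in E. exact (W_inj _ _ _ _ _ E). }
  change (fold_right Rplus 0 ?l) with (sumR l).
  apply Rle_trans with (sumR (map g m)).
  2:{ apply sub_sum.
      - apply NoDup_filter, Vlist_NoDup.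
      - apply NoDup_flat_map_key; [apply seq_NoDup| |].
        + intros i _. apply FinFun.Injective_map_NoDup; [|apply seq_NoDup].
          intros j j' E. apply Hinj in E. tauto.
        + intros i i' z _ _ Hz Hz'. unfold F in Hz, Hz'. apply in_map_iff in Hz, Hz'.
          destruct Hz as [j [<- _]]. destruct Hz' as [j' [E _]]. apply Hinj in E. lia.
      - intros z Hz. unfold m in Hz. apply in_flat_map in Hz. destruct Hz as [i [Hi Hz]].
        unfold F in Hz. apply in_map_iff in Hz. destruct Hz as [j [<- Hj]].
        apply in_seq in Hi, Hj. apply filter_In. split.
        + apply Vlist_In, HsV, W_inV; auto; lia.
        + rewrite pt_eqb_false; auto. intros E. rewrite <- Hsu in E.
          apply (f_equal s) in E. rewrite !Hinv in E. apply (W_neq u' i j); auto; lia.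
      - intros; apply ginv_nonneg. }
  unfold m. rewrite sumR_flat_map, <- sumR_T.
  apply sumR_le. intros i Hi. apply in_seq in Hi.
  unfold F. rewrite map_map. unfold Rdiv.
  replace (INR (S i)) with (INR (length (seq 0 (S i)))) by (rewrite length_seq; auto).
  apply sumR_const_le. intros j Hj. apply in_seq in Hj. unfold g.
  assert (Hw : walk n i u (s (W u' i j))).
  { rewrite <- Hsu. apply walk_map; auto. apply W_walk; auto; lia. }
  assert (Hne : u <> s (W u' i j)).
  { intros E. rewrite <- Hsu in E. apply (f_equal s) in E. rewrite !Hinv in E.
    apply (W_neq u' i j); auto; lia. }
  destruct (dist_bounds _ _ _ _ Hw Hne) as [Hd1 Hd2].
  apply Rinv_le_contravar.
  - apply pow_lt. apply (lt_INR 0); lia.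
  - apply pow_incr. split; [apply pos_INR| apply le_INR; auto].
Qed.

Definition swap12 (v : pt) : pt := ((c2 v, c1 v), c3 v).
Definition swap13 (v : pt) : pt := ((c3 v, c2 v), c1 v).

Ltac symtac :=
  first
  [ intros [[? ?] ?]; reflexivity
  | intros [[? ?] ?]; unfold inV, swap12, swap13, c1, c2, c3; cbn [fst snd]; lia
  | unfold edge; intros [[a1 a2] a3] [[b1 b2] b3] (H1&H2&H3&H4&H5&H6);
    unfold inV, swap12, swap13, c1, c2, c3 in *; cbn [fst snd] in *;
    repeat split; try lia;
    intros E; apply H3; injection E; intros; subst; reflexivity
  | unfold swap12, swap13, c1, c2, c3; cbn [fst snd]; lia ].

Lemma final n u : (1 <= n)%nat -> inV n u -> Zu n u < / ln (INR n + 1).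
Proof.
  intros Hn HV.
  assert (Hfin : forall s : pt -> pt,
    (forall v, s (s v) = v) -> (forall v, inV n v -> inV n (s v)) ->
    (forall v w, edge n v w -> edge n (s v) (s w)) ->
    (Z.of_nat n <= 3 * Z.abs (c1 (s u)))%Z -> Zu n u < / ln (INR n + 1)).
  { intros s H1 H2 H3 H4.
    pose proof (family n s u H1 H2 H3 HV) as Hf.
    set (a := Z.to_nat (Z.abs (c1 (s u)))) in *.
    assert (Ha : (1 <= a)%nat) by lia.
    assert (Hna : (n <= 3 * a)%nat) by lia.
    pose proof (T_bound a Ha) as HT.
    assert (Hln : ln (INR n + 1) <= ln (3 * INR a + 1)).
    { assert (INR n <= 3 * INR a).
      { replace 3 with (INR 3) by (simpl; lra). rewrite <- mult_INR. apply le_INR; auto. }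
      destruct (Rle_lt_or_eq_dec _ _ H) as [Hl|He].
      - left. apply ln_increasing. pose proof (pos_INR n); lra. lra.
      - rewrite He; lra. }
    assert (Hpos : 0 < ln (INR n + 1)).
    { rewrite <- ln_1. apply ln_increasing; [lra|]. apply (le_INR 1) in Hn. simpl in Hn. lra. }
    unfold Zu. apply Rinv_lt_contravar.
    - apply Rmult_lt_0_compat; lra.
    - lra. }
  destruct u as [[x y] z].
  assert (Hx : (Z.abs x + Z.abs y + Z.abs z = Z.of_nat n)%Z) by exact HV.
  destruct (Z_le_gt_dec (Z.of_nat n) (3 * Z.abs x)).
  - apply (Hfin (fun v => v)); auto.
  - destruct (Z_le_gt_dec (Z.of_nat n) (3 * Z.abs y)).
    + apply (Hfin swap12); symtac.
    + apply (Hfin swap13); symtac.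
Qed.

Theorem lemma3 (n : nat) (u : pt) :
  (1 <= n)%nat -> inV n u -> Zu n u < / ln (INR n + 1).
Proof. exact (final n u). Qed.
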